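(* Let $\mathcal T$ be a theory of $\mathsf{LGIM}$ consisting of generalised graded implications and let $\zeta_1,\dots,\zeta_n\Rightarrow_e\eta$ be a generalised graded implication. If $\mathcal T\models\zeta_1,\dots,\zeta_n\Rightarrow_e\eta$, then $\mathcal T\vdash_{\mathsf{LGIM}}\zeta_1,\dots,\zeta_n\Rightarrow_t\eta$ for every $t\in[0,1]$ with $t<e$.
   Context: Fix a continuous t-norm $\odot$ on $[0,1]$ and let $c\oplus d = 1-((1-c)\odot(1-d))$. Write $c\odot_{\L} d=\max(c+d-1,0)$, $c\oplus_{\L} d=\min(c+d,1)$, and $\mathrm{avg}(r_1,\dots,r_n)=(r_1+\dots+r_n)/n$. Basic expressions: built from countably many variables $\phi_0,\phi_1,\dots$ and constants $\bot,\top$ by binary $\land,\lor,\odot$ and unary $\sim$. A generalised graded implication is written $\alpha_1,\dots,\alpha_n\Rightarrow_c\beta$ where $n\ge1$, $\alpha_1,\dots,\alpha_n$ is a multiset of basic expressions, $\beta$ a basic expression, $c\in[0,1]$; for $n=1$ it is a graded implication $\alpha\Rightarrow_c\beta$. Formulas of $\mathsf{LGIM}$ are built from generalised graded implications by classical $\land,\lor,\lnot$; $\Phi\to\Psi$ abbreviates $\lnot\Phi\lor\Psi$. A theory is a set of formulas. Semantics: an evaluation is a map $v$ from basic expressions to $[0,1]$ with $v(\bot)=0$, $v(\top)=1$, interpreting $\land$ by min, $\lor$ by max, $\odot$ by the t-norm, $\sim$ by $x\mapsto1-x$. $v$ satisfies $\alpha_1,\dots,\alpha_n\Rightarrow_c\beta$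 iff $\mathrm{avg}(v(\alpha_1),\dots,v(\alpha_n))\le v(\beta)+1-c$; satisfaction extends classically; $\mathcal T\models\Phi$ means every evaluation satisfying all of $\mathcal T$ satisfies $\Phi$. Calculus $\mathsf{LGIM}$: axioms are (i) all substitution instances (by generalised graded implications) of classical propositional tautologies; (ii) for all basic expressions $\alpha,\beta,\gamma$ and $c,d\in[0,1]$: ($\land_1$) $(\alpha\Rightarrow_d\beta)\land(\alpha\Rightarrow_d\gamma)\to(\alpha\Rightarrow_d\beta\land\gamma)$; ($\land_2$) $\alpha\land\beta\Rightarrow_1\alpha$; ($\land_3$) $\alpha\land\beta\Rightarrow_1\beta$; ($\lor_1$) $(\alpha\Rightarrow_d\gamma)\land(\beta\Rightarrow_d\gamma)\to(\alpha\lor\beta\Rightarrow_d\gamma)$; ($\lor_2$) $\alpha\Rightarrow_1\alpha\lor\beta$; ($\lor_3$) $\beta\Rightarrow_1\alpha\lor\beta$; ($\odot_1$) $(\top\Rightarrow_c\alpha)\land(\top\Rightarrow_d\beta)\to(\top\Rightarrow_{c\odot d}\alpha\odot\beta)$; ($\odot_2$) $(\alpha\Rightarrow_c\bot)\land(\beta\Rightarrow_d\bot)\to(\alpha\odot\beta\Rightarrow_{c\oplus d}\bot)$; ($\odot_3$) $\top\Rightarrow_1\top\odot\top$; ($\sim_1$) $(\alpha\Rightarrow_d\beta)\to(\sim\beta\Rightarrow_d\sim\alpha)$; ($\sim_2$) $\sim\sim\alpha\Rightarrow_1\alpha$; ($\sim_3$) $\alpha\Rightarrow_1\sim\sim\alpha$;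 ($\top$) $\alpha\Rightarrow_1\top$; ($\bot$) $\bot\Rightarrow_1\alpha$; (0) $\alpha\Rightarrow_0\beta$; ($c$) $\alpha\Rightarrow_c\alpha$; (inkons) $\lnot(\top\Rightarrow_c\bot)$ for $c>0$; (trans$_1$) $(\alpha\Rightarrow_c\beta)\land(\beta\Rightarrow_d\gamma)\to(\alpha\Rightarrow_{c\odot_{\L}d}\gamma)$; (trans$_2$) $(\alpha\Rightarrow_c\bot)\land(\top\Rightarrow_d\beta)\to(\alpha\Rightarrow_{c\oplus_{\L}d}\beta)$; (lin$_1$) $(\alpha\Rightarrow_1\beta)\lor(\beta\Rightarrow_1\alpha)$; (lin$_2$) $(\top\Rightarrow_d\alpha)\lor(\alpha\Rightarrow_{1-d}\bot)$; (iii) for all basic expressions $\alpha,\alpha_i,\beta_i,\beta,\gamma$ and $c,c_i,d\in[0,1]$: (trans$\varnothing_1$) $(\alpha_1\Rightarrow_{c_1}\beta_1)\land\dots\land(\alpha_n\Rightarrow_{c_n}\beta_n)\land(\beta_1,\dots,\beta_n\Rightarrow_d\gamma)\to(\alpha_1,\dots,\alpha_n\Rightarrow_{\mathrm{avg}(c_1,\dots,c_n)\odot_{\L}d}\gamma)$; (trans$\varnothing_2$) $(\alpha_1,\dots,\alpha_n\Rightarrow_c\beta)\land(\beta\Rightarrow_d\gamma)\to(\alpha_1,\dots,\alpha_n\Rightarrow_{c\odot_{\L}d}\gamma)$; (trans$\varnothing_3$) $(\alpha_1\Rightarrow_{c_1}\bot)\land\dots\land(\alpha_n\Rightarrow_{c_n}\bot)\land(\top\Rightarrow_d\beta)\to(\alpha_1,\dots,\alpha_n\Rightarrow_{\mathrm{avg}(c_1,\dots,c_n)\oplus_{\L}d}\beta)$;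 ($\top\varnothing$) $(\top,\dots,\top\Rightarrow_c\alpha)\to(\top\Rightarrow_c\alpha)$. The only rule is modus ponens. $\mathcal T\vdash_{\mathsf{LGIM}}\Phi$ means $\Phi$ has a finite derivation from axioms and elements of $\mathcal T$ by modus ponens. *)

(* Defs.v *)
From Stdlib Require Import Reals List Permutation.
Import ListNotations.
Open Scope R_scope.

Definition in01 (x : R) : Prop := 0 <= x <= 1.

Definition is_tnorm (tn : R -> R -> R) : Prop :=
  (forall x y, in01 x -> in01 y -> in01 (tn x y)) /\
  (forall x y, in01 x -> in01 y -> tn x y = tn y x) /\
  (forall x y z, in01 x -> in01 y -> in01 z -> tn x (tn y z) = tn (tn x y) z) /\
  (forall x x' y, in01 x -> in01 x' -> in01 y -> x <= x' -> tn x y <= tn x' y) /\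
  (forall x, in01 x -> tn x 1 = x).

Definition continuous01 (tn : R -> R -> R) : Prop :=
  forall x y, in01 x -> in01 y -> forall eps, 0 < eps ->
    exists delta, 0 < delta /\
      forall x' y', in01 x' -> in01 y' -> Rabs (x - x') < delta -> Rabs (y - y') < delta ->
        Rabs (tn x y - tn x' y') < eps.

Definition is_cont_tnorm (tn : R -> R -> R) : Prop := is_tnorm tn /\ continuous01 tn.

Definition tconorm (tn : R -> R -> R) (c d : R) : R := 1 - tn (1 - c) (1 - d).

Definition luk_and (c d : R) : R := Rmax (c + d - 1) 0.
Definition luk_or (c d : R) : R := Rmin (c + d) 1.

Definition avg (l : list R) : R := fold_right Rplus 0 l / INR (length l).

Inductive bexpr : Type :=
| BVar : nat -> bexpr
| BBot : bexpr
| BTop : bexpr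
| BAnd : bexpr -> bexpr -> bexpr
| BOr : bexpr -> bexpr -> bexpr
| BOdot : bexpr -> bexpr -> bexpr
| BNeg : bexpr -> bexpr.

(* ---------- formulas of LGIM ----------
   GI a l b c  represents the generalised graded implication
   a, l_1, ..., l_k  =>_c  b   (antecedent multiset a :: l, non-empty). *)
Inductive form : Type :=
| GI : bexpr -> list bexpr -> bexpr -> R -> form
| FAnd : form -> form -> form
| FOr : form -> form -> form
| FNot : form -> form.

Definition FImp (p q : form) : form := FOr (FNot p) q.

Definition GI1 (a b : bexpr) (c : R) : form := GI a [] b c.

Fixpoint wf_form (p : form) : Prop :=
  match p with
  | GI _ _ _ c => in01 c
  | FAnd p q | FOr p q => wf_form p /\ wf_form q
  | FNot p => wf_form p
  end.

Definition is_gi (p : form) : Prop := exists a l b c, p = GI a l b c.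

Definition is_eval (tn : R -> R -> R) (v : bexpr -> R) : Prop :=
  (forall e, in01 (v e)) /\ v BBot = 0 /\ v BTop = 1 /\
  (forall a b, v (BAnd a b) = Rmin (v a) (v b)) /\
  (forall a b, v (BOr a b) = Rmax (v a) (v b)) /\
  (forall a b, v (BOdot a b) = tn (v a) (v b)) /\
  (forall a, v (BNeg a) = 1 - v a).

Fixpoint sat (v : bexpr -> R) (p : form) : Prop :=
  match p with
  | GI a l b c => avg (map v (a :: l)) <= v b + 1 - c
  | FAnd p q => sat v p /\ sat v q
  | FOr p q => sat v p \/ sat v q
  | FNot p => ~ sat v p
  end.

Definition models (tn : R -> R -> R) (T : form -> Prop) (p : form) : Prop :=
  forall v, is_eval tn v -> (forall q, T q -> sat v q) -> sat v p.

(* ---------- classical tautologies ----------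
   A formula is a substitution instance of a classical tautology iff it is true
   under every boolean valuation of its atoms; atoms are generalised graded
   implications whose antecedent is a multiset, so valuations must not
   distinguish atoms whose antecedents are permutations of each other. *)
Definition atom_val := bexpr -> list bexpr -> bexpr -> R -> bool.

Definition perm_invariant (V : atom_val) : Prop :=
  forall a l a' l' b c, Permutation (a :: l) (a' :: l') -> V a l b c = V a' l' b c.

Fixpoint peval (V : atom_val) (p : form) : bool :=
  match p with
  | GI a l b c => V a l b c
  | FAnd p q => andb (peval V p) (peval V q)
  | FOr p q => orb (peval V p) (peval V q)
  | FNot p => negb (peval V p)
  end.

Definition tautology_instance (p : form) : Prop :=
  wf_form p /\ forall V, perm_invariant V -> peval V p = true.

Fixpoint conjs (p : form) (l : list form) : form :=
  match l with
  | [] => p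
  | q :: l' => FAnd p (conjs q l')
  end.

(* triples (alpha_i, beta_i, c_i) *)
Definition t1 (x : bexpr * bexpr * R) : bexpr := fst (fst x).
Definition t2 (x : bexpr * bexpr * R) : bexpr := snd (fst x).
Definition t3 (x : bexpr * bexpr * R) : R := snd x.

Inductive axiom (tn : R -> R -> R) : form -> Prop :=
| ax_taut : forall p, tautology_instance p -> axiom tn p
| ax_and1 : forall a b g d, in01 d ->
    axiom tn (FImp (FAnd (GI1 a b d) (GI1 a g d)) (GI1 a (BAnd b g) d))
| ax_and2 : forall a b, axiom tn (GI1 (BAnd a b) a 1)
| ax_and3 : forall a b, axiom tn (GI1 (BAnd a b) b 1)
| ax_or1 : forall a b g d, in01 d ->
    axiom tn (FImp (FAnd (GI1 a g d) (GI1 b g d)) (GI1 (BOr a b) g d))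
| ax_or2 : forall a b, axiom tn (GI1 a (BOr a b) 1)
| ax_or3 : forall a b, axiom tn (GI1 b (BOr a b) 1)
| ax_odot1 : forall a b c d, in01 c -> in01 d ->
    axiom tn (FImp (FAnd (GI1 BTop a c) (GI1 BTop b d)) (GI1 BTop (BOdot a b) (tn c d)))
| ax_odot2 : forall a b c d, in01 c -> in01 d ->
    axiom tn (FImp (FAnd (GI1 a BBot c) (GI1 b BBot d)) (GI1 (BOdot a b) BBot (tconorm tn c d)))
| ax_odot3 : axiom tn (GI1 BTop (BOdot BTop BTop) 1)
| ax_neg1 : forall a b d, in01 d ->
    axiom tn (FImp (GI1 a b d) (GI1 (BNeg b) (BNeg a) d))
| ax_neg2 : forall a, axiom tn (GI1 (BNeg (BNeg a)) a 1)
| ax_neg3 : forall a, axiom tn (GI1 a (BNeg (BNeg a)) 1)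
| ax_top : forall a, axiom tn (GI1 a BTop 1)
| ax_bot : forall a, axiom tn (GI1 BBot a 1)
| ax_zero : forall a b, axiom tn (GI1 a b 0)
| ax_refl : forall a c, in01 c -> axiom tn (GI1 a a c)
| ax_inkons : forall c, in01 c -> 0 < c -> axiom tn (FNot (GI1 BTop BBot c))
| ax_trans1 : forall a b g c d, in01 c -> in01 d ->
    axiom tn (FImp (FAnd (GI1 a b c) (GI1 b g d)) (GI1 a g (luk_and c d)))
| ax_trans2 : forall a b c d, in01 c -> in01 d ->
    axiom tn (FImp (FAnd (GI1 a BBot c) (GI1 BTop b d)) (GI1 a b (luk_or c d)))
| ax_lin1 : forall a b, axiom tn (FOr (GI1 a b 1) (GI1 b a 1))
| ax_lin2 : forall a d, in01 d -> axiom tn (FOr (GI1 BTop a d) (GI1 a BBot (1 - d)))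
(* (trans0_1): triples (alpha_i, beta_i, c_i), i = 1..n, given as x :: xs *)
| ax_gtrans1 : forall (x : bexpr * bexpr * R) xs g d,
    Forall (fun y => in01 (t3 y)) (x :: xs) -> in01 d ->
    axiom tn (FImp
      (conjs (GI1 (t1 x) (t2 x) (t3 x))
             (map (fun y => GI1 (t1 y) (t2 y) (t3 y)) xs ++ [GI (t2 x) (map t2 xs) g d]))
      (GI (t1 x) (map t1 xs) g (luk_and (avg (map t3 (x :: xs))) d)))
| ax_gtrans2 : forall a l b g c d, in01 c -> in01 d ->
    axiom tn (FImp (FAnd (GI a l b c) (GI1 b g d)) (GI a l g (luk_and c d)))
(* (trans0_3): pairs (alpha_i, c_i) given as x :: xs *)
| ax_gtrans3 : forall (x : bexpr * R) xs b d,
    Forall (fun y => in01 (snd y)) (x :: xs) -> in01 d ->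
    axiom tn (FImp
      (conjs (GI1 (fst x) BBot (snd x))
             (map (fun y => GI1 (fst y) BBot (snd y)) xs ++ [GI1 BTop b d]))
      (GI (fst x) (map fst xs) b (luk_or (avg (map snd (x :: xs))) d)))
| ax_gtop : forall k a c, in01 c ->
    axiom tn (FImp (GI BTop (repeat BTop k) a c) (GI1 BTop a c)).

Inductive lgim_derivable (tn : R -> R -> R) (T : form -> Prop) : form -> Prop :=
| d_ax : forall p, axiom tn p -> lgim_derivable tn T p
| d_hyp : forall p, T p -> lgim_derivable tn T p
| d_mp : forall p q, lgim_derivable tn T p -> lgim_derivable tn T (FImp p q) -> lgim_derivable tn T q.

(* Main.v *)
Require Import Defs.
From Stdlib Require Import Reals List Lra Classical Permutation.
Import ListNotations.
Open Scope R_scope.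

Ltac taut_tac := split; [simpl; tauto | intros V _; simpl;
  repeat match goal with |- context [peval V ?x] => destruct (peval V x) end; reflexivity].

Section Taut.
Variables p q r : form.
Hypotheses (wp : wf_form p) (wq : wf_form q) (wr : wf_form r).
Lemma taut_K : tautology_instance (FImp p (FImp q p)). Proof. taut_tac. Qed.
Lemma taut_I : tautology_instance (FImp p p). Proof. taut_tac. Qed.
Lemma taut_S : tautology_instance (FImp (FImp p (FImp q r)) (FImp (FImp p q) (FImp p r))).
Proof. taut_tac. Qed.
Lemma taut_pair : tautology_instance (FImp p (FImp q (FAnd p q))). Proof. taut_tac. Qed.
Lemma taut_em : tautology_instance (FImp (FImp p r) (FImp (FImp (FNot p) r) r)). Proof. taut_tac. Qed.
Lemma taut_contra : tautology_instance (FImp p (FImp (FNot p) r)). Proof. taut_tac. Qed.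
Lemma taut_or : tautology_instance (FImp (FOr p q) (FImp (FNot p) (FImp (FNot q) r))). Proof. taut_tac. Qed.
End Taut.

Section Der.
Variable tn : R -> R -> R.
Lemma der_mono (S S' : form -> Prop) p : lgim_derivable tn S p -> (forall q, S q -> S' q) -> lgim_derivable tn S' p.
Proof. intros H HS; induction H. apply d_ax; auto. apply d_hyp; auto. eapply d_mp; [apply IHlgim_derivable1|apply IHlgim_derivable2]. Qed.

Lemma mp1 S a b : lgim_derivable tn S a -> tautology_instance (FImp a b) -> lgim_derivable tn S b.
Proof. intros Ha Ht. eapply d_mp; [exact Ha| apply d_ax, ax_taut, Ht]. Qed.
Lemma mp2 S a b c : lgim_derivable tn S a -> lgim_derivable tn S b -> tautology_instance (FImp a (FImp b c)) -> lgim_derivable tn S c.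
Proof. intros Ha Hb Ht. eapply d_mp; [exact Hb|]. eapply mp1; [exact Ha|exact Ht]. Qed.

Lemma der_finite S p : lgim_derivable tn S p -> exists L, (forall q, In q L -> S q) /\ lgim_derivable tn (fun q => In q L) p.
Proof.
  intros H; induction H.
  - exists []; split; [intros q []| apply d_ax; auto].
  - exists [p]; split; [intros q [<-|[]]; auto | apply d_hyp; simpl; auto].
  - destruct IHlgim_derivable1 as [L1 [H1 D1]], IHlgim_derivable2 as [L2 [H2 D2]].
    exists (L1 ++ L2); split.
    + intros r Hr; apply in_app_or in Hr; destruct Hr; auto.
    + eapply d_mp; [eapply der_mono; [exact D1|] | eapply der_mono; [exact D2|]]; intros r Hr; apply in_or_app; auto.
Qed.
End Der.


Lemma luk_and_in01 c d : in01 c -> in01 d -> in01 (luk_and c d).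
Proof. unfold in01, luk_and, Rmax; intros; destruct (Rle_dec _ _); lra. Qed.
Lemma luk_or_in01 c d : in01 c -> in01 d -> in01 (luk_or c d).
Proof. unfold in01, luk_or, Rmin; intros; destruct (Rle_dec _ _); lra. Qed.
Lemma in01_1m c : in01 c -> in01 (1 - c).
Proof. unfold in01; lra. Qed.
Lemma in01_0 : in01 0. Proof. unfold in01; lra. Qed.
Lemma in01_1 : in01 1. Proof. unfold in01; lra. Qed.

Lemma sum_in01 l : Forall in01 l -> 0 <= fold_right Rplus 0 l <= INR (length l).
Proof.
  induction 1; cbn [fold_right length]. simpl; lra. rewrite S_INR. unfold in01 in H; lra.
Qed.

Lemma avg_in01 l : l <> [] -> Forall in01 l -> in01 (avg l).
Proof.
  intros Hn Hf. apply sum_in01 in Hf. unfold avg, in01.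
  assert (Hl : 0 < INR (length l)). { destruct l. congruence. simpl length. rewrite S_INR. pose proof (pos_INR (length l)). lra. }
  set (s := fold_right Rplus 0 l) in *. set (n := INR (length l)) in *.
  split. unfold Rdiv; apply Rmult_le_pos; [lra| left; apply Rinv_0_lt_compat; lra].
  assert (H : s * / n <= n * / n) by (apply Rmult_le_compat_r; [left; apply Rinv_0_lt_compat|]; lra).
  rewrite Rinv_r in H by lra. exact H.
Qed.

Lemma conjs_wf p l : wf_form p -> Forall wf_form l -> wf_form (conjs p l).
Proof. revert p; induction l; intros p Hp Hl; simpl; auto. inversion Hl; subst; split; auto. Qed.

Section AxWf.
Variable tn : R -> R -> R.
Hypothesis Htn : is_tnorm tn.

Lemma tn_in01 c d : in01 c -> in01 d -> in01 (tn c d).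
Proof. destruct Htn as [H _]; apply H. Qed.
Lemma tconorm_in01 c d : in01 c -> in01 d -> in01 (tconorm tn c d).
Proof. intros; unfold tconorm; apply in01_1m, tn_in01; apply in01_1m; auto. Qed.

Lemma axiom_wf p : axiom tn p -> wf_form p.
Proof.
  Local Hint Resolve luk_and_in01 luk_or_in01 in01_1m in01_0 in01_1 tn_in01 tconorm_in01 : wfdb.
  destruct 1; unfold FImp, GI1; simpl; repeat match goal with |- _ /\ _ => split end; eauto with wfdb.
  - destruct H; auto.
  - apply conjs_wf. inversion H; assumption.
    apply Forall_app; split. apply Forall_map. inversion H; subst.
    eapply Forall_impl; [|eassumption]; intros; simpl; assumption.
    constructor; simpl; auto.
  - apply luk_and_in01; auto. apply avg_in01. congruence.
    change (t3 x :: map t3 xs) with (map t3 (x::xs)). apply Forall_map. exact H.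
  - apply conjs_wf. inversion H; assumption.
    apply Forall_app; split. apply Forall_map. inversion H; subst.
    eapply Forall_impl; [|eassumption]; intros; simpl; assumption.
    constructor; simpl; auto.
  - apply luk_or_in01; auto. apply avg_in01. congruence.
    change (snd x :: map snd xs) with (map snd (x::xs)). apply Forall_map. exact H.
Qed.



Lemma der_wf S p : (forall q, S q -> wf_form q) -> lgim_derivable tn S p -> wf_form p.
Proof.
  intros HS H; induction H. apply axiom_wf; auto. auto. simpl in IHlgim_derivable2; tauto.
Qed.

Lemma deduction S p q : (forall r, S r -> wf_form r) -> wf_form p ->
  lgim_derivable tn (fun r => S r \/ r = p) q -> lgim_derivable tn S (FImp p q).
Proof.
  intros HS Hp H.
  assert (HS' : forall r, S r \/ r = p -> wf_form r) by (intros r [Hr| ->]; auto).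
  induction H.
  - eapply mp1. apply d_ax; eassumption. apply taut_K; auto. apply axiom_wf; auto.
  - destruct H as [H| ->].
    + eapply mp1. apply d_hyp; eassumption. apply taut_K; auto.
    + apply d_ax, ax_taut, taut_I; auto.
  - assert (Hw : wf_form (FImp p0 q)) by (eapply (der_wf _ _ HS'); eassumption).
    simpl in Hw.
    eapply mp2. exact IHlgim_derivable2. exact IHlgim_derivable1.
    apply taut_S; tauto.
Qed.
End AxWf.


Lemma sum_shift (A : Type) (f g : A -> R) eps L : (forall y, In y L -> g y - eps <= f y) ->
  fold_right Rplus 0 (map g L) - INR (length L) * eps <= fold_right Rplus 0 (map f L).
Proof.
  induction L; intros H; cbn [map fold_right length]. simpl; lra.
  rewrite S_INR. assert (H1 := H a (or_introl eq_refl)).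
  assert (H2 : forall y, In y L -> g y - eps <= f y) by (intros; apply H; right; auto).
  specialize (IHL H2). lra.
Qed.

Lemma len_pos (A : Type) (a : A) L : 0 < INR (length (a :: L)).
Proof. cbn [length]. rewrite S_INR. pose proof (pos_INR (length L)); lra. Qed.

Lemma avg_shift (A : Type) (f g : A -> R) eps a L : (forall y, In y (a :: L) -> g y - eps <= f y) ->
  avg (map g (a :: L)) - eps <= avg (map f (a :: L)).
Proof.
  intros H. apply sum_shift in H. unfold avg. rewrite !length_map.
  pose proof (len_pos A a L) as Hn.
  set (n := INR (length (a :: L))) in *.
  set (Sg := fold_right Rplus 0 (map g (a :: L))) in *.
  set (Sf := fold_right Rplus 0 (map f (a :: L))) in *.
  apply (Rmult_le_reg_r n); [lra|].
  replace ((Sg / n - eps) * n) with (Sg - n * eps) by (field; lra).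
  replace (Sf / n * n) with Sf by (field; lra). lra.
Qed.

Lemma sum_1m (A : Type) (h : A -> R) L :
  fold_right Rplus 0 (map (fun y => 1 - h y) L) = INR (length L) - fold_right Rplus 0 (map h L).
Proof. induction L; cbn [map fold_right length]. simpl; ring. rewrite S_INR, IHL. ring. Qed.

Lemma avg_1m (A : Type) (h : A -> R) a L :
  avg (map (fun y => 1 - h y) (a :: L)) = 1 - avg (map h (a :: L)).
Proof.
  unfold avg. rewrite !length_map, sum_1m. pose proof (len_pos A a L). field. lra.
Qed.

Lemma avg_single x : avg [x] = x.
Proof. unfold avg; simpl. field. Qed.

Lemma rmax_lt x r : 0 < r -> x <= 1 -> in01 (Rmax 0 (x - r)) /\ (Rmax 0 (x - r) = 0 \/ Rmax 0 (x - r) < x)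
   /\ x - r <= Rmax 0 (x - r) /\ (0 <= x -> Rabs (x - Rmax 0 (x - r)) <= r).
Proof.
  intros. unfold in01, Rmax; destruct (Rle_dec _ _); repeat split; try lra;
  try (intros; unfold Rabs; destruct (Rcase_abs _); lra).
Qed.


Definition mkT (f : bexpr -> R) (y : bexpr) : bexpr * bexpr * R := (BTop, y, f y).
Definition mkP (g : bexpr -> R) (y : bexpr) : bexpr * R := (y, g y).
Lemma map_t1 f l : map t1 (map (mkT f) l) = repeat BTop (length l).
Proof. induction l; simpl; f_equal; auto. Qed.
Lemma map_t2 f l : map t2 (map (mkT f) l) = l.
Proof. induction l; simpl; f_equal; auto. Qed.
Lemma map_t3 f l : map t3 (map (mkT f) l) = map f l.
Proof. induction l; simpl; f_equal; auto. Qed.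
Lemma map_fst' g l : map fst (map (mkP g) l) = l.
Proof. induction l; simpl; f_equal; auto. Qed.
Lemma map_snd' g l : map snd (map (mkP g) l) = map g l.
Proof. induction l; simpl; f_equal; auto. Qed.

Section Canon.
Variable tn : R -> R -> R.
Hypothesis Htn : is_tnorm tn.
Hypothesis Hct : continuous01 tn.
Variable Gam : form -> Prop.
Variable G : form.
Hypothesis HGw : wf_form G.
Hypothesis HGamw : forall q, Gam q -> wf_form q.
Hypothesis HnG : ~ lgim_derivable tn Gam G.
Hypothesis Hmax : forall p, wf_form p -> ~ Gam p -> lgim_derivable tn (fun r => Gam r \/ r = p) G.

Notation D p := (lgim_derivable tn Gam p).

Lemma Dax p : axiom tn p -> D p. Proof. apply d_ax. Qed.

Lemma D_imp_G p : wf_form p -> D p \/ D (FImp p G).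
Proof.
  intros Hp. destruct (classic (Gam p)). left; apply d_hyp; auto.
  right. apply deduction; auto.
Qed.

Lemma D_em p : wf_form p -> D p \/ D (FNot p).
Proof.
  intros Hp. destruct (D_imp_G p Hp) as [|H1]; auto.
  destruct (D_imp_G (FNot p) Hp) as [|H2]; auto.
  exfalso; apply HnG. eapply mp2; [exact H1|exact H2|]. apply taut_em; auto.
Qed.

Lemma D_cons p : wf_form p -> D p -> D (FNot p) -> False.
Proof. intros Hp H1 H2. apply HnG. eapply mp2; [exact H1|exact H2|]. apply taut_contra; auto. Qed.

Lemma D_or p q : wf_form p -> wf_form q -> D (FOr p q) -> D p \/ D q.
Proof.
  intros Hp Hq H. destruct (D_em p Hp) as [|H1]; auto. destruct (D_em q Hq) as [|H2]; auto.
  exfalso; apply HnG. eapply d_mp; [exact H2|]. eapply mp2; [exact H|exact H1|]. apply taut_or; auto.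
Qed.

Lemma D_and p q : wf_form p -> wf_form q -> D p -> D q -> D (FAnd p q).
Proof. intros Hp Hq H1 H2. eapply mp2; [exact H1|exact H2|]. apply taut_pair; auto. Qed.

Lemma D_mp p q : D p -> D (FImp p q) -> D q.
Proof. apply d_mp. Qed.

Lemma D_conjs p l : wf_form p -> Forall wf_form l -> D p -> Forall (fun q => D q) l -> D (conjs p l).
Proof.
  revert p; induction l; intros p Hp Hw H1 H2; simpl; auto.
  inversion Hw; inversion H2; subst. apply D_and; auto. apply conjs_wf; auto.
Qed.

Lemma GL a l b c d : D (GI a l b c) -> in01 c -> in01 d -> d <= c -> D (GI a l b d).
Proof.
  intros H Hc Hd Hdc.
  assert (H1 : in01 (1 - (c - d))) by (unfold in01 in *; lra).
  assert (E : luk_and c (1 - (c - d)) = d).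
  { unfold luk_and, Rmax; destruct (Rle_dec _ _); unfold in01 in *; lra. }
  rewrite <- E. eapply D_mp; [|apply Dax, (ax_gtrans2 tn a l b b c (1 - (c - d))); eauto].
  apply D_and; simpl; auto. apply Dax, ax_refl; auto.
Qed.

Definition Aset (a : bexpr) (c : R) : Prop := in01 c /\ D (GI1 BTop a c).
Lemma Abnd a : bound (Aset a). Proof. exists 1. intros x [Hx _]. unfold in01 in Hx; lra. Qed.
Lemma Ane a : exists x, Aset a x. Proof. exists 0. split. apply in01_0. apply Dax, ax_zero. Qed.
Definition v (a : bexpr) : R := proj1_sig (completeness (Aset a) (Abnd a) (Ane a)).
Lemma v_lub a : is_lub (Aset a) (v a). Proof. unfold v; destruct (completeness _ _ _); auto. Qed.

Lemma L2 a c : in01 c -> D (GI1 BTop a c) -> c <= v a.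
Proof. intros. apply (proj1 (v_lub a)). split; auto. Qed.

Lemma v01 a : in01 (v a).
Proof.
  split. apply L2. apply in01_0. apply Dax, ax_zero.
  apply (proj2 (v_lub a)). intros x [Hx _]. unfold in01 in Hx; lra.
Qed.

Lemma L1 a c : in01 c -> c < v a -> D (GI1 BTop a c).
Proof.
  intros Hc Hlt. apply NNPP; intro Hn.
  assert (v a <= c). { apply (proj2 (v_lub a)). intros x [Hx Dx].
    destruct (Rle_dec x c) as [|Hxc]; auto. exfalso; apply Hn. eapply GL; eauto. lra. }
  lra.
Qed.

Lemma Lc a r : 0 < r -> D (GI1 BTop a (Rmax 0 (v a - r))).
Proof.
  intros Hr. destruct (rmax_lt (v a) r Hr (proj2 (v01 a))) as [H1 [H2 _]].
  destruct H2 as [E|H2]. rewrite E. apply Dax, ax_zero. apply L1; auto.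
Qed.

Lemma L3 a d : in01 d -> d < 1 - v a -> D (GI1 a BBot d).
Proof.
  intros Hd Hlt.
  assert (Hd' : in01 (1 - d)) by (apply in01_1m; auto).
  destruct (D_or _ _ (Hd' : wf_form (GI1 BTop a (1 - d))) (in01_1m _ Hd' : wf_form (GI1 a BBot (1 - (1 - d))))
     (Dax _ (ax_lin2 _ a (1 - d) Hd'))) as [H|H].
  - apply L2 in H; auto. lra.
  - replace (1 - (1 - d)) with d in H by ring. exact H.
Qed.

Lemma Ld a r : 0 < r -> D (GI1 a BBot (Rmax 0 (1 - v a - r))).
Proof.
  intros Hr. pose proof (v01 a). destruct (rmax_lt (1 - v a) r Hr) as [H1 [H2 _]]. unfold in01 in *; lra.
  destruct H2 as [E|H2]. rewrite E. apply Dax, ax_zero. apply L3; auto.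
Qed.


Lemma TG a l b c : D (GI a l b c) -> in01 c -> avg (map v (a::l)) <= v b + 1 - c.
Proof.
  intros H Hc. apply Rnot_lt_le; intro Hlt.
  set (r := (avg (map v (a::l)) - (v b + 1 - c))/2).
  assert (Hr: 0 < r) by (unfold r; lra).
  set (f := fun y => Rmax 0 (v y - r)).
  assert (Hf : forall y, in01 (f y)) by (intro y; apply (rmax_lt (v y) r Hr (proj2 (v01 y)))).
  assert (HF : Forall (fun y => in01 (t3 y)) (mkT f a :: map (mkT f) l)).
  { constructor. apply Hf. apply Forall_map, Forall_forall; intros; apply Hf. }
  assert (Hax := ax_gtrans1 tn (mkT f a) (map (mkT f) l) b c HF Hc).
  rewrite map_t1, map_t2 in Hax.
  assert (Havg : in01 (avg (map t3 (mkT f a :: map (mkT f) l)))).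
  { apply avg_in01. simpl; congruence. apply Forall_map. exact HF. }
  pose proof (fun Hp => D_mp _ _ Hp (Dax _ Hax)) as Dc.
  cbn [t1 t2 t3 mkT fst snd] in Dc.
  assert (Dc2 : D (GI BTop (repeat BTop (length l)) b (luk_and (avg (map t3 (mkT f a :: map (mkT f) l))) c))).
  { apply Dc. apply D_conjs.
    - apply Hf.
    - apply Forall_app; split. apply Forall_map, Forall_map, Forall_forall; intros; exact (Hf _). constructor; auto.
    - apply (Lc a r Hr).
    - apply Forall_app; split. apply Forall_map, Forall_map, Forall_forall; intros; exact (Lc _ r Hr).
      constructor; auto. }
  assert (Hl : in01 (luk_and (avg (map t3 (mkT f a :: map (mkT f) l))) c)) by (apply luk_and_in01; auto).
  pose proof (D_mp _ _ Dc2 (Dax _ (ax_gtop _ _ _ _ Hl))) as Hl2. clear Hl; rename Hl2 into Hl.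
  apply L2 in Hl. 2: apply luk_and_in01; auto.
  change (mkT f a :: map (mkT f) l) with (map (mkT f) (a :: l)) in Hl.
  rewrite map_t3 in Hl.
  assert (Hs : avg (map v (a::l)) - r <= avg (map f (a::l))).
  { apply avg_shift. intros y _. apply (rmax_lt (v y) r Hr (proj2 (v01 y))). }
  assert (Hm : avg (map f (a::l)) + c - 1 <= luk_and (avg (map f (a :: l))) c) by (unfold luk_and; apply Rmax_l).
  unfold r in *. lra.
Qed.

Lemma T1 a b c : D (GI1 a b c) -> in01 c -> v a <= v b + 1 - c.
Proof. intros H Hc. pose proof (TG a [] b c H Hc) as X. simpl map in X. rewrite avg_single in X. exact X. Qed.

Lemma RV z zs eta e t : in01 t -> in01 e -> t < e -> avg (map v (z::zs)) <= v eta + 1 - e -> D (GI z zs eta t).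
Proof.
  intros Ht He Hte Havg.
  set (r := (e - t)/4). assert (Hr : 0 < r) by (unfold r; lra).
  set (g := fun y => Rmax 0 (1 - v y - r)).
  assert (Hg : forall y, in01 (g y)) by (intro y; pose proof (v01 y); apply (rmax_lt (1 - v y) r Hr); unfold in01 in *; lra).
  set (c := Rmax 0 (v eta - r)).
  assert (Hc : in01 c) by (apply (rmax_lt (v eta) r Hr (proj2 (v01 eta)))).
  assert (HF : Forall (fun y => in01 (snd y)) (mkP g z :: map (mkP g) zs)).
  { constructor. apply Hg. apply Forall_map, Forall_forall; intros; apply Hg. }
  assert (Hax := ax_gtrans3 tn (mkP g z) (map (mkP g) zs) eta c HF Hc).
  rewrite map_fst' in Hax.
  pose proof (fun Hp => D_mp _ _ Hp (Dax _ Hax)) as Dc.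
  cbn [mkP fst snd] in Dc.
  set (S := avg (map snd (mkP g z :: map (mkP g) zs))) in *.
  assert (HS : in01 S) by (apply avg_in01; [simpl; congruence| apply Forall_map; exact HF]).
  assert (D2 : D (GI z zs eta (luk_or S c))).
  { apply Dc. apply D_conjs.
    - apply Hg.
    - apply Forall_app; split. apply Forall_map, Forall_map, Forall_forall; intros; exact (Hg _). constructor; auto.
    - apply (Ld z r Hr).
    - apply Forall_app; split. apply Forall_map, Forall_map, Forall_forall; intros; exact (Ld _ r Hr).
      constructor; [apply (Lc eta r Hr)|auto]. }
  apply (GL _ _ _ _ _ D2). apply luk_or_in01; auto. auto.
  assert (ES : S = avg (map g (z :: zs))).
  { unfold S. change (mkP g z :: map (mkP g) zs) with (map (mkP g) (z :: zs)). rewrite map_snd'. reflexivity. }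
  assert (Hs : avg (map (fun y => 1 - v y) (z::zs)) - r <= avg (map g (z::zs))).
  { apply avg_shift. intros y _. apply (rmax_lt (1 - v y) r Hr). pose proof (v01 y); unfold in01 in *; lra. }
  rewrite avg_1m in Hs.
  assert (Hc2 : v eta - r <= c) by (apply (rmax_lt (v eta) r Hr (proj2 (v01 eta)))).
  unfold luk_or, Rmin. destruct (Rle_dec _ _); unfold in01 in *; unfold r in *; lra.
Qed.

Lemma v_bot : v BBot = 0.
Proof.
  pose proof (v01 BBot) as [H0 H1]. destruct (Req_dec (v BBot) 0) as [|Hn]; auto. exfalso.
  set (c := v BBot / 2).
  assert (Hc : in01 c) by (unfold c, in01; lra).
  apply (D_cons (GI1 BTop BBot c)). exact Hc.
  apply L1; auto; unfold c; lra.
  apply Dax, ax_inkons; auto. unfold c; lra.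
Qed.

Lemma v_top : v BTop = 1.
Proof. pose proof (v01 BTop). pose proof (L2 BTop 1 in01_1 (Dax _ (ax_refl _ _ _ in01_1))). unfold in01 in *; lra. Qed.

Lemma v_and a b : v (BAnd a b) = Rmin (v a) (v b).
Proof.
  pose proof (T1 _ _ _ (Dax _ (ax_and2 _ a b)) in01_1).
  pose proof (T1 _ _ _ (Dax _ (ax_and3 _ a b)) in01_1).
  pose proof (v01 a); pose proof (v01 b); pose proof (v01 (BAnd a b)).
  apply Rle_antisym. apply Rmin_glb; lra.
  apply Rnot_lt_le; intro Hlt.
  set (c := (v (BAnd a b) + Rmin (v a) (v b)) / 2).
  assert (Hm1 := Rmin_l (v a) (v b)). assert (Hm2 := Rmin_r (v a) (v b)).
  assert (Hc : in01 c) by (unfold c, in01 in *; lra).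
  assert (D (GI1 BTop (BAnd a b) c)).
  { eapply D_mp; [|apply Dax, ax_and1; exact Hc]. apply D_and; auto; apply L1; auto; unfold c; lra. }
  apply L2 in H4; auto. unfold c in H4; lra.
Qed.

Lemma v_or a b : v (BOr a b) = Rmax (v a) (v b).
Proof.
  pose proof (T1 _ _ _ (Dax _ (ax_or2 _ a b)) in01_1).
  pose proof (T1 _ _ _ (Dax _ (ax_or3 _ a b)) in01_1).
  pose proof (v01 a); pose proof (v01 b); pose proof (v01 (BOr a b)).
  apply Rle_antisym. 2: apply Rmax_lub; lra.
  apply Rnot_lt_le; intro Hlt.
  assert (Hm1 := Rmax_l (v a) (v b)). assert (Hm2 := Rmax_r (v a) (v b)).
  set (c := (v (BOr a b) + Rmax (v a) (v b)) / 2).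
  assert (Hd : in01 (1 - c)) by (unfold c, in01 in *; lra).
  assert (D (GI1 (BOr a b) BBot (1 - c))).
  { eapply D_mp; [|apply Dax, ax_or1; exact Hd]. apply D_and; auto; apply L3; auto; unfold c; lra. }
  apply T1 in H4; auto. rewrite v_bot in H4. unfold c in H4; lra.
Qed.

Lemma v_negbot : v (BNeg BBot) = 1.
Proof.
  pose proof (T1 _ _ _ (Dax _ (ax_neg3 _ BTop)) in01_1).
  pose proof (T1 _ _ _ (D_mp _ _ (Dax _ (ax_bot _ (BNeg BTop))) (Dax _ (ax_neg1 _ _ _ _ in01_1))) in01_1).
  pose proof (v01 (BNeg BBot)). rewrite v_top in *. unfold in01 in *; lra.
Qed.

Lemma v_negtop : v (BNeg BTop) = 0.
Proof.
  pose proof (T1 _ _ _ (Dax _ (ax_neg2 _ BBot)) in01_1).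
  pose proof (T1 _ _ _ (D_mp _ _ (Dax _ (ax_top _ (BNeg BBot))) (Dax _ (ax_neg1 _ _ _ _ in01_1))) in01_1).
  pose proof (v01 (BNeg BTop)). rewrite v_bot in *. unfold in01 in *; lra.
Qed.

Lemma v_neg a : v (BNeg a) = 1 - v a.
Proof.
  pose proof (v01 a); pose proof (v01 (BNeg a)); pose proof (v01 (BNeg (BNeg a))).
  pose proof (T1 _ _ _ (Dax _ (ax_neg3 _ a)) in01_1).
  apply Rle_antisym; apply Rnot_lt_le; intro Hlt.
  - set (c := (v (BNeg a) + 1 - v a) / 2).
    assert (Hc : in01 c) by (unfold c, in01 in *; lra).
    assert (H4 : D (GI1 BTop (BNeg a) c)) by (apply L1; auto; unfold c; lra).
    pose proof (T1 _ _ _ (D_mp _ _ H4 (Dax _ (ax_neg1 _ _ _ _ Hc))) Hc) as HT.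
    rewrite v_negtop in HT. unfold c in *; lra.
  - set (c := (v (BNeg a) + 1 - v a) / 2).
    assert (Hc : in01 c) by (unfold c, in01 in *; lra).
    assert (H4 : D (GI1 a BBot c)) by (apply L3; auto; unfold c; lra).
    pose proof (T1 _ _ _ (D_mp _ _ H4 (Dax _ (ax_neg1 _ _ _ _ Hc))) Hc) as HT.
    rewrite v_negbot in HT. unfold c in *; lra.
Qed.

Lemma v_odot a b : v (BOdot a b) = tn (v a) (v b).
Proof.
  pose proof (v01 a) as Ha; pose proof (v01 b) as Hb; pose proof (v01 (BOdot a b)) as Hab.
  apply Rle_antisym; apply Rnot_lt_le; intro Hlt.
  - set (eps := v (BOdot a b) - tn (v a) (v b)).
    destruct (Hct (v a) (v b) Ha Hb eps ltac:(unfold eps; lra)) as [del [Hdel Hcont]].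
    set (r := del / 2). assert (Hr : 0 < r) by (unfold r; lra).
    set (da := Rmax 0 (1 - v a - r)). set (db := Rmax 0 (1 - v b - r)).
    destruct (rmax_lt (1 - v a) r Hr) as [Hda [_ [Hda2 Hda3]]]. unfold in01 in Ha; lra.
    destruct (rmax_lt (1 - v b) r Hr) as [Hdb [_ [Hdb2 Hdb3]]]. unfold in01 in Hb; lra.
    fold da in Hda, Hda2, Hda3. fold db in Hdb, Hdb2, Hdb3.
    pose proof (T1 _ _ _ (D_mp _ _ (D_and (GI1 a BBot da) (GI1 b BBot db) Hda Hdb (Ld a r Hr) (Ld b r Hr))
                 (Dax _ (ax_odot2 _ _ _ _ _ Hda Hdb))) (tconorm_in01 _ Htn _ _ Hda Hdb)) as HT.
    rewrite v_bot in HT. unfold tconorm in HT.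
    assert (X := Hcont (1 - da) (1 - db) (in01_1m _ Hda) (in01_1m _ Hdb)).
    apply Rabs_def2 in X. unfold eps in X; lra.
    + assert (Hx := Hda3 ltac:(unfold in01 in *; lra)). unfold r in *.
      replace (v a - (1 - da)) with (- (1 - v a - da)) by ring. rewrite Rabs_Ropp. lra.
    + assert (Hx := Hdb3 ltac:(unfold in01 in *; lra)). unfold r in *.
      replace (v b - (1 - db)) with (- (1 - v b - db)) by ring. rewrite Rabs_Ropp. lra.
  - set (eps := tn (v a) (v b) - v (BOdot a b)).
    destruct (Hct (v a) (v b) Ha Hb eps ltac:(unfold eps; lra)) as [del [Hdel Hcont]].
    set (r := del / 2). assert (Hr : 0 < r) by (unfold r; lra).
    destruct (rmax_lt (v a) r Hr (proj2 Ha)) as [Hca [_ [_ Hca3]]].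
    destruct (rmax_lt (v b) r Hr (proj2 Hb)) as [Hcb [_ [_ Hcb3]]].
    pose proof (L2 _ _ (tn_in01 _ Htn _ _ Hca Hcb) (D_mp _ _ (D_and (GI1 BTop a _) (GI1 BTop b _) Hca Hcb (Lc a r Hr) (Lc b r Hr))
                 (Dax _ (ax_odot1 _ _ _ _ _ Hca Hcb)))) as HT.
    assert (X := Hcont _ _ Hca Hcb).
    assert (Y : Rabs (tn (v a) (v b) - tn (Rmax 0 (v a - r)) (Rmax 0 (v b - r))) < eps).
    { apply X. assert (Hx := Hca3 (proj1 Ha)); unfold r in *; lra.
      assert (Hx := Hcb3 (proj1 Hb)); unfold r in *; lra. }
    apply Rabs_def2 in Y. unfold eps in Y; lra.
Qed.

Lemma v_eval : is_eval tn v.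
Proof.
  split. exact v01. split. exact v_bot. split. exact v_top. split. exact v_and.
  split. exact v_or. split. exact v_odot. exact v_neg.
Qed.
End Canon.

From mathcomp Require all_boot classical_sets boolp.

Module ZornM.
Import mathcomp.boot.ssreflect mathcomp.boot.ssrfun mathcomp.boot.ssrbool mathcomp.classical.classical_sets mathcomp.classical.boolp.
Lemma zorn_sets (T:Type) (P : (T -> Prop) -> Prop) :
  (forall F : (T->Prop)->Prop, (forall X, F X -> P X) ->
     (forall X Y, F X -> F Y -> (forall x, X x -> Y x) \/ (forall x, Y x -> X x)) ->
     P (fun x => exists X, F X /\ X x)) ->
  exists A, P A /\ forall B, (forall x, A x -> B x) -> (exists x, B x /\ ~ A x) -> ~ P B.
Proof.
move=> H.
have [A [PA Amax]] : exists A, P A /\ forall B, (A `<` B)%classic -> ~ P B.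
  apply: Zorn_bigcup => F FP Ftot.
  have -> : (\bigcup_(X in F) X)%classic = (fun x => exists X, F X /\ X x).
    by apply/funext => x; apply/propext; split => [[X FX Xx]|[X [FX Xx]]]; [exists X|exists X].
  apply: H; first exact: FP.
  move=> X Y FX FY; case: (Ftot X Y FX FY) => h; [left|right] => x; exact: h.
exists A; split => // B AB [x [Bx nAx]]; apply: Amax; split => // BA.
exact: nAx (BA x Bx).
Qed.
End ZornM.

Open Scope R_scope.

Lemma chain_fin (T : form -> Prop) (F : (form -> Prop) -> Prop) (Ftot : forall X Y, F X -> F Y -> (forall x, X x -> Y x) \/ (forall x, Y x -> X x)) L :
  (forall q, In q L -> T q \/ exists X, F X /\ X q) ->
  (forall q, In q L -> T q) \/ exists Y, F Y /\ forall q, In q L -> T q \/ Y q.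
Proof.
  induction L as [|a L IH]; intros H. left; intros q [].
  destruct IH as [IH|[Y [FY HY]]]. intros; apply H; right; auto.
  - destruct (H a (or_introl eq_refl)) as [Ta|[X [FX Xa]]].
    + left; intros q [<-|Hq]; auto.
    + right; exists X; split; auto. intros q [<-|Hq]; auto.
  - destruct (H a (or_introl eq_refl)) as [Ta|[X [FX Xa]]].
    + right; exists Y; split; auto. intros q [<-|Hq]; auto.
    + destruct (Ftot X Y FX FY) as [XY|YX].
      * right; exists Y; split; auto. intros q [<-|Hq]; auto.
      * right; exists X; split; auto. intros q [<-|Hq]; auto. destruct (HY q Hq); auto.
Qed.

Theorem mainTheorem9 :
  forall (tn : R -> R -> R) (T : form -> Prop)
         (z : bexpr) (zs : list bexpr) (eta : bexpr) (e : R),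
    is_cont_tnorm tn ->
    (forall p, T p -> is_gi p /\ wf_form p) ->
    in01 e ->
    models tn T (GI z zs eta e) ->
    forall t, in01 t -> t < e -> lgim_derivable tn T (GI z zs eta t).
Proof.
  intros tn T z zs eta e [Htn Hct] HT He Hmod t Ht Hte.
  set (G := GI z zs eta t).
  apply NNPP; intro nd.
  set (P := fun X : form -> Prop => (forall x, X x -> wf_form x) /\ ~ lgim_derivable tn (fun q => T q \/ X q) G).
  destruct (ZornM.zorn_sets form P) as [A [[Aw AnG] Amax]].
  { intros F FP Ftot. split.
    - intros x [X [FX Xx]]. exact (proj1 (FP X FX) x Xx).
    - intro Hd. apply der_finite in Hd. destruct Hd as [L [HL Hd]].
      destruct (chain_fin T F Ftot L) as [H1|[Y [FY HY]]].
      + intros q Hq. specialize (HL q Hq). simpl in HL. destruct HL as [H0|[X [FX Xq]]]; [left; exact H0| right; exists X; auto].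
      + apply nd. eapply der_mono; [exact Hd|]. auto.
      + apply (proj2 (FP Y FY)). eapply der_mono; [exact Hd|]. auto. }
  set (Gam := fun q => T q \/ A q).
  assert (HGw : wf_form G) by exact Ht.
  assert (HGamw : forall q, Gam q -> wf_form q) by (intros q [Hq|Hq]; [apply HT|apply Aw]; auto).
  assert (Hmax : forall p, wf_form p -> ~ Gam p -> lgim_derivable tn (fun r => Gam r \/ r = p) G).
  { intros p Hp Hn. apply NNPP; intro Hn2.
    apply (Amax (fun q => A q \/ q = p)). auto. exists p; split; auto. intro; apply Hn; right; auto.
    split. intros x [Hx| ->]; auto.
    intro Hd; apply Hn2. eapply der_mono; [exact Hd|]. unfold Gam; tauto. }
  assert (Hev := v_eval tn Htn Hct Gam G HGw HGamw AnG Hmax).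
  assert (Hs := Hmod _ Hev).
  simpl in Hs.
  apply AnG. apply (RV tn Htn Gam G HGw HGamw AnG Hmax z zs eta e t Ht He Hte).
  apply Hs. intros q Hq. destruct (HT q Hq) as [[a [l [b [c ->]]]] Hw].
  simpl. apply (TG tn Gam). apply d_hyp; left; auto. exact Hw.
Qed.
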